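(* For every $n$-dimensional Hilbert space $\mathcal H$ and every $N\ge n$, the set $\mathcal F^{(1)}$ of $1$-erasure optimal $(N,n)$ dual pairs under the Frobenius norm is nonempty.
   Context: $\mathcal H$ is a complex Hilbert space of finite dimension $n$, inner product linear in the first argument. A finite sequence $F=\{f_i\}_{i=1}^N$ in $\mathcal H$ is a frame if there are constants $0<A\le B$ with $A\|f\|^2\le\sum_{i=1}^N|\langle f,f_i\rangle|^2\le B\|f\|^2$ for all $f$. A sequence $G=\{g_i\}_{i=1}^N$ is a dual of the frame $F$ if $f=\sum_{i=1}^N\langle f,g_i\rangle f_i$ for all $f\in\mathcal H$; then $(F,G)$ is an $(N,n)$ dual pair. The error operator for $\Lambda\subseteq\{1,\dots,N\}$ is $E_{\Lambda,F,G}f=\sum_{i\in\Lambda}\langle f,f_i\rangle g_i$. With $\|T\|_{\mathcal F}=\sqrt{\operatorname{tr}(T^*T)}$, set $\epsilon^{(1)}_{F,G}=\max_{1\le i\le N}\|E_{\{i\},F,G}\|_{\mathcal F}$, $\epsilon^{(1)}=\inf\{\epsilon^{(1)}_{F,G}:(F,G)\text{ an }(N,n)\text{ dual pair}\}$ and $\mathcal F^{(1)}=\{(F,G):\epsilon^{(1)}_{F,G}=\epsilon^{(1)}\}$. *)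

(* Defs.v *)
From HB Require Import structures.
From mathcomp Require Import all_boot all_order all_algebra.
From mathcomp Require Import complex.
From mathcomp Require Import boolp classical_sets reals.
Set Implicit Arguments. Unset Strict Implicit. Unset Printing Implicit Defensive.
Import Order.TTheory GRing.Theory Num.Theory.
Local Open Scope ring_scope.

(* The n-dimensional complex Hilbert space H is modelled as C^n = 'cV[R[i]]_n
   with the standard inner product, linear in the first argument. *)
Section FrameDefs.
Variable R : realType.
Local Notation C := R[i].

Definition cconj (z : C) : C := conjc z.

Definition ip (n : nat) (f g : 'cV[C]_n) : C := \sum_(k < n) f k 0 * cconj (g k 0).

Definition nrm2 (n : nat) (f : 'cV[C]_n) : R := complex.Re (ip f f).

Definition abs2 (z : C) : R := complex.Re (z * cconj z).

Definition is_frame (n N : nat) (F : 'I_N -> 'cV[C]_n) : Prop :=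
  exists A B : R, 0 < A /\ A <= B /\
    forall f : 'cV[C]_n,
      A * nrm2 f <= \sum_(i < N) abs2 (ip f (F i)) /\
      \sum_(i < N) abs2 (ip f (F i)) <= B * nrm2 f.

Definition is_dual (n N : nat) (F G : 'I_N -> 'cV[C]_n) : Prop :=
  forall f : 'cV[C]_n, f = \sum_(i < N) ip f (G i) *: F i.

Definition dual_pair (n N : nat) (F G : 'I_N -> 'cV[C]_n) : Prop :=
  is_frame F /\ is_dual F G.

Definition adjmx (m p : nat) (A : 'M[C]_(m, p)) : 'M[C]_(p, m) := map_mx cconj A^T.

(* matrix of E_{Lambda,F,G} f = sum_{i in Lambda} <f, f_i> g_i *)
Definition err_op (n N : nat) (Lam : {set 'I_N}) (F G : 'I_N -> 'cV[C]_n)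
  : 'M[C]_n := \sum_(i in Lam) (G i *m adjmx (F i)).

(* (G i *m adjmx (F i)) *m f = <f, F i> *: G i, since adjmx (F i) *m f is the 1x1 matrix <f, F i>. *)

(* Frobenius norm ||T||_F = sqrt(tr(T^* T)) (the trace is real, >= 0) *)
Definition frob (n : nat) (T : 'M[C]_n) : R := Num.sqrt (complex.Re (\tr (adjmx T *m T))).

(* eps^{(1)}_{F,G} = max_i ||E_{{i},F,G}||_F  (all terms >= 0) *)
Definition eps1FG (n N : nat) (F G : 'I_N -> 'cV[C]_n) : R :=
  \big[Num.max/0]_(i < N) frob (err_op [set i] F G).

Definition eps1 (n N : nat) : R :=
  inf [set e : R | exists F G : 'I_N -> 'cV[C]_n, dual_pair F G /\ e = eps1FG F G].

Definition opt1 (n N : nat) : set (('I_N -> 'cV[C]_n) * ('I_N -> 'cV[C]_n)) :=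
  [set FG | dual_pair FG.1 FG.2 /\ eps1FG FG.1 FG.2 = eps1 n N].

End FrameDefs.

(* Main.v *)
Require Import Defs.
From HB Require Import structures.
From mathcomp Require Import all_boot all_order all_algebra complex boolp classical_sets reals.
From mathcomp Require Import cyclic separable cyclotomic ring lra.
Import Order.TTheory GRing.Theory Num.Theory.
Local Open Scope ring_scope.
Local Open Scope complex_scope.
Section S. Variable R : realType.
Local Notation C := R[i].
Local Notation Re := (@complex.Re R).
Local Notation Im := (@complex.Im R).

Lemma prim_ex (N : nat) : (N > 0)%N -> exists z : C, N.-primitive_root z.
Proof.
move=> N_gt0.
pose p : {poly C} := 'X^N - 1; have [r Dp] := closed_field_poly_normal p.
rewrite (monicP _) ?monicXnsubC // scale1r in Dp.
have rn1: all N.-unity_root r by apply/allP=> z; rewrite -root_prod_XsubC -Dp.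
have sz_r: (N < (size r).+1)%N.
  by rewrite -(size_prod_XsubC r id) -Dp size_XnsubC.
have [|z] := hasP (has_prim_root N_gt0 rn1 _ sz_r); last by exists z.
by rewrite -separable_prod_XsubC -Dp separable_Xn_sub_1 // pnatr_eq0 -lt0n.
Qed.

Lemma cs_real (n : nat) (x1 x2 y1 y2 : 'I_n -> R) :
  \sum_k (x1 k * y1 k + x2 k * y2 k) <=
  Num.sqrt ((\sum_k (x1 k ^+ 2 + x2 k ^+ 2)) * (\sum_k (y1 k ^+ 2 + y2 k ^+ 2))).
Proof.
pose A := \sum_k (x1 k ^+ 2 + x2 k ^+ 2); pose B := \sum_k (y1 k ^+ 2 + y2 k ^+ 2).
pose s := \sum_k (x1 k * y1 k + x2 k * y2 k). rewrite -/A -/B -/s.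
have H t : 0 <= t ^+ 2 * A - 2 * t * s + B.
  have -> : t ^+ 2 * A - 2 * t * s + B =
      \sum_k ((t * x1 k - y1 k) ^+ 2 + (t * x2 k - y2 k) ^+ 2).
    rewrite /A /B /s !mulr_sumr -sumrB -big_split /=; apply: eq_bigr => k _; ring.
  by apply: sumr_ge0 => k _; rewrite addr_ge0 // sqr_ge0.
have A0 : 0 <= A by apply: sumr_ge0 => k _; rewrite addr_ge0 // sqr_ge0.
have B0 : 0 <= B by apply: sumr_ge0 => k _; rewrite addr_ge0 // sqr_ge0.
have [hs|hs] := leP s 0; first by apply: le_trans hs _; exact: sqrtr_ge0.
have [A00|Ap] := eqVneq A 0.
  have := H ((B + 1) / (2 * s)).
  have -> : ((B + 1) / (2 * s)) ^+ 2 * A - 2 * ((B + 1) / (2 * s)) * s + B = -1.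
    rewrite A00; field; lra.
  lra.
have Ap' : 0 < A by rewrite lt_def Ap A0.
have := H (s / A).
have -> : (s / A) ^+ 2 * A - 2 * (s / A) * s + B = B - s ^+ 2 / A.
  by field.
rewrite subr_ge0 ler_pdivrMr // => h.
rewrite -(ger0_norm (ltW hs)) -sqrtr_sqr ler_sqrt; last by rewrite mulr_ge0.
by rewrite mulrC.
Qed.

Definition n2 (z : C) : R := Re z ^+ 2 + Im z ^+ 2.
Lemma n2_ge0 z : 0 <= n2 z. Proof. by rewrite addr_ge0 // sqr_ge0. Qed.
Lemma Re_sum (I : Type) (r : seq I) (P : pred I) (F : I -> C) :
  Re (\sum_(i <- r | P i) F i) = \sum_(i <- r | P i) Re (F i).
Proof. by elim/big_rec2: _ => // i x y _ <-; case: (F i) => ? ?; case: y. Qed.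
Lemma ReJ (z : C) : Re (z * conjc z) = n2 z.
Proof. by case: z => a b /=; rewrite /n2 /=; ring. Qed.
Lemma Re_Jmul (z : C) : Re (conjc z * z) = n2 z.
Proof. by case: z => a b /=; rewrite /n2 /=; ring. Qed.
Lemma Re_mulJ (a b : C) : Re (a * conjc b) = Re a * Re b + Im a * Im b.
Proof. by case: a => a1 a2; case: b => b1 b2 /=; ring. Qed.
Lemma n2_mulJ (a b : C) : n2 (a * conjc b) = n2 a * n2 b.
Proof. by case: a => a1 a2; case: b => b1 b2; rewrite /n2 /=; ring. Qed.

Lemma nrm2E n (f : 'cV[C]_n) : nrm2 f = \sum_k n2 (f k 0).
Proof. by rewrite /nrm2 /ip Re_sum; apply: eq_bigr => k _; rewrite /cconj ReJ. Qed.

Lemma ReipCS n (f g : 'cV[C]_n) : Re (ip f g) <= Num.sqrt (nrm2 f * nrm2 g).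
Proof.
rewrite /ip Re_sum !nrm2E /n2.
under eq_bigr do rewrite /cconj Re_mulJ.
apply: (cs_real n (fun k => Re (f k 0)) (fun k => Im (f k 0)) (fun k => Re (g k 0)) (fun k => Im (g k 0))).
Qed.

Lemma frobE n (f g : 'cV[C]_n) : frob (g *m adjmx f) = Num.sqrt (nrm2 g * nrm2 f).
Proof.
rewrite /frob; congr Num.sqrt.
rewrite !nrm2E mulrC mulr_suml /mxtrace Re_sum; apply: eq_bigr => b _.
rewrite mulr_sumr !mxE Re_sum; apply: eq_bigr => a _.
rewrite /adjmx !mxE !big_ord1 !mxE /cconj Re_Jmul n2_mulJ mulrC.
done.
Qed.

Lemma bigmax_ge0 N (F : 'I_N -> R) : 0 <= \big[Num.max/0]_(i < N) F i.
Proof. by apply: (big_rec (fun x => 0 <= x)) => // i x _ hx; rewrite le_max hx orbT. Qed.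

Lemma sum_le_max N (F : 'I_N -> R) : (forall i, 0 <= F i) ->
  \sum_(i < N) F i <= N%:R * \big[Num.max/0]_(i < N) F i.
Proof.
elim: N F => [|N IH] F F0; first by rewrite !big_ord0 mulr0.
rewrite !big_ord_recl /=.
have h := IH (fun i => F (lift ord0 i)) (fun i => F0 _).
set m := \big[Num.max/0]_(i < N) F (lift ord0 i) in h *.
have m0 : 0 <= m by apply: bigmax_ge0.
have h1 : m <= Num.max (F ord0) m by rewrite le_max lexx orbT.
have h2 : F ord0 <= Num.max (F ord0) m by rewrite le_max lexx.
rewrite (_ : (N.+1)%:R = N%:R + 1 :> R); last by rewrite -natr1.
have N0 : 0 <= N%:R :> R by apply: ler0n.
nra.
Qed.

Lemma err1 n N (F G : 'I_N -> 'cV[C]_n) i : err_op [set i] F G = G i *m adjmx (F i).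
Proof. by rewrite /err_op big_set1. Qed.

Lemma dual_trace n N (F G : 'I_N -> 'cV[C]_n) : is_dual F G ->
  \sum_(k < n) (1 : C) = \sum_i ip (F i) (G i).
Proof.
move=> dual.
have hk k : (1 : C) = \sum_i conjc (G i k 0) * F i k 0.
  have := congr1 (fun M : 'cV[C]_n => M k 0) (dual (delta_mx k 0)).
  rewrite /= !mxE !eqxx /= => e; transitivity (true%:R : C); first by [].
  rewrite e summxE; apply: eq_bigr => i _.
  rewrite !mxE; congr (_ * _).
  rewrite /ip (bigD1 k) //= big1 => [|m /negbTE mk]; last by rewrite !mxE mk mul0r.
  by rewrite !mxE !eqxx mul1r addr0.
rewrite (eq_bigr _ (fun k _ => hk k)) exchange_big /=; apply: eq_bigr => i _.
by rewrite /ip; apply: eq_bigr => k _; rewrite mulrC.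
Qed.

Lemma lower n N (F G : 'I_N -> 'cV[C]_n) : is_dual F G ->
  n%:R <= N%:R * eps1FG F G.
Proof.
move=> /dual_trace h.
have -> : n%:R = Re (\sum_(k < n) (1 : C)).
  by rewrite Re_sum sumr_const card_ord.
rewrite h Re_sum /eps1FG.
apply: (le_trans _ (sum_le_max N (fun i => frob (err_op [set i] F G)) _)); last first.
  by move=> i; exact: sqrtr_ge0.
apply: ler_sum => i _; rewrite err1 frobE mulrC; exact: ReipCS.
Qed.

Lemma conjcM (a b : C) : conjc (a * b) = conjc a * conjc b.
Proof. by case: a => ? ?; case: b => ? ? /=; congr (_ +i* _); ring. Qed.
Lemma conjc_sum (I : Type) (r : seq I) (P : pred I) (F : I -> C) :
  conjc (\sum_(i <- r | P i) F i) = \sum_(i <- r | P i) conjc (F i).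
Proof.
elim/big_rec2: _ => [|i x y _ <-]; first exact: conjc0.
by case: (F i) => ? ?; case: y => ? ? /=; congr (_ +i* _); ring.
Qed.
Lemma Re_realmul (a : R) (x : C) : Re (a%:C * x) = a * Re x.
Proof. by case: x => x1 x2 /=; ring. Qed.
Lemma Re_natmul (N : nat) (x : C) : Re (N%:R * x) = N%:R * Re x.
Proof. by rewrite -[(N%:R : C)](rmorph_nat (@real_complex R)) Re_realmul. Qed.

Section Harm.
Variables (n N : nat) (z : C).
Hypotheses (Npos : (0 < N)%N) (hz : N.-primitive_root z) (nN : (n <= N)%N).

Lemma normz : `|z| = 1.
Proof.
have : `|z| ^+ N = 1 by rewrite -normrX prim_expr_order // normr1.
by move/eqP; rewrite pexpr_eq1 // => /eqP.
Qed.

Lemma unitmod (u : C) : `|u| = 1 -> u * conjc u = 1.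
Proof. by move=> h; have := normCK u; rewrite h expr1n => <-. Qed.

Lemma normzki k i : `|(z ^+ k) ^+ i| = 1.
Proof. by rewrite !normrX normz !expr1n. Qed.

Lemma Ssum (k m : 'I_n) :
  \sum_(i < N) (z ^+ k) ^+ i * conjc ((z ^+ m) ^+ i) = (k == m)%:R * N%:R.
Proof.
pose w := z ^+ k * conjc (z ^+ m).
have -> : \sum_(i < N) (z ^+ k) ^+ i * conjc ((z ^+ m) ^+ i) = \sum_(i < N) w ^+ i.
  by apply: eq_bigr => i _; rewrite rmorphXn -exprMn.
have [km|km] := eqVneq k m.
  rewrite (_ : true%:R = 1) // mul1r.
  have -> : w = 1 by rewrite /w km unitmod // normrX normz expr1n.
  rewrite (eq_bigr (fun _ => 1)) ?sumr_const ?card_ord // => i _; exact: expr1n.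
rewrite (_ : false%:R = 0) // mul0r.
have wN : w ^+ N = 1.
  rewrite /w exprMn -rmorphXn -!exprM !(mulnC _ N) !exprM (prim_expr_order hz).
  by rewrite !expr1n rmorph1 mulr1.
have w1 : w != 1.
  apply/negP => /eqP w1.
  have : z ^+ k = z ^+ m.
    have e : z ^+ m * conjc (z ^+ m) = 1 by rewrite unitmod // normrX normz expr1n.
    have : z ^+ k = w * z ^+ m by rewrite /w -mulrA [conjc _ * _]mulrC e mulr1.
    by rewrite w1 mul1r.
  move/eqP; rewrite (eq_prim_root_expr hz) !modn_small => [/eqP e||].
  - by move: km; rewrite -val_eqE /= e eqxx.
  - exact: leq_trans (ltn_ord m) nN.
  - exact: leq_trans (ltn_ord k) nN.
have := subrX1 w N; rewrite wN subrr => /esym/eqP; rewrite mulf_eq0 subr_eq0 (negbTE w1) /=.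
by move/eqP.
Qed.

Definition F0 (i : 'I_N) : 'cV[C]_n := \col_k ((z ^+ k) ^+ i).
Definition cN : C := ((N%:R : R)^-1)%:C.
Definition G0 (i : 'I_N) : 'cV[C]_n := cN *: F0 i.

Lemma cNJ : conjc cN = cN. Proof. exact: conjc_real. Qed.
Lemma cNN : cN * N%:R = 1.
Proof.
rewrite /cN -[(N%:R : C)](rmorph_nat (@real_complex R)) -rmorphM mulVf ?rmorph1 //.
by rewrite pnatr_eq0 -lt0n.
Qed.

Lemma dual0 : is_dual F0 G0.
Proof.
move=> f; apply/matrixP => k j; rewrite (ord1 j) summxE.
have -> : \sum_(i < N) (ip f (G0 i) *: F0 i) k 0 =
   \sum_(i < N) \sum_(m < n) f m 0 * cN * ((z ^+ k) ^+ i * conjc ((z ^+ m) ^+ i)).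
  apply: eq_bigr => i _; rewrite !mxE /ip mulr_suml; apply: eq_bigr => m _.
  rewrite !mxE /cconj conjcM cNJ; ring.
rewrite exchange_big /=.
rewrite (bigD1 k) //= [X in _ + X]big1; last first.
  move=> m mk; rewrite -mulr_sumr Ssum eq_sym (negbTE mk).
  by rewrite (_ : false%:R = 0) // !mul0r mulr0.
by rewrite -mulr_sumr Ssum eqxx (_ : true%:R = 1) // mul1r -mulrA cNN mulr1 addr0.
Qed.

Lemma frame0 : is_frame F0.
Proof.
exists N%:R, N%:R; split; first by rewrite ltr0n.
split=> // f.
suff -> : \sum_(i < N) abs2 (ip f (F0 i)) = N%:R * nrm2 f by rewrite lexx.
rewrite /abs2 /nrm2 -Re_natmul -Re_sum; congr Re.
have -> : \sum_(i < N) ip f (F0 i) * cconj (ip f (F0 i)) =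
  \sum_(i < N) \sum_(k < n) \sum_(m < n) f k 0 * conjc (f m 0) *
      ((z ^+ m) ^+ i * conjc ((z ^+ k) ^+ i)).
  apply: eq_bigr => i _; rewrite /ip /cconj conjc_sum mulr_suml; apply: eq_bigr => k _.
  rewrite mulr_sumr; apply: eq_bigr => m _; rewrite !mxE !conjcM conjcK; ring.
rewrite exchange_big /= /ip mulr_sumr; apply: eq_bigr => k _.
rewrite exchange_big /= (bigD1 k) //= [X in _ + X]big1; last first.
  move=> m mk; rewrite -mulr_sumr Ssum (negbTE mk).
  by rewrite (_ : false%:R = 0) // !mul0r mulr0.
by rewrite -mulr_sumr Ssum eqxx (_ : true%:R = 1) // mul1r addr0 /cconj mulrC.
Qed.

Lemma eps0 : eps1FG F0 G0 <= n%:R / N%:R.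
Proof.
have q0 : 0 <= n%:R / N%:R :> R by rewrite divr_ge0 // ler0n.
apply: (big_rec (fun x => x <= n%:R / N%:R)) => // i x _ hx.
rewrite ge_max hx andbT err1 frobE.
have -> : nrm2 (G0 i) * nrm2 (F0 i) = (n%:R / N%:R) ^+ 2.
  have -> : nrm2 (F0 i) = n%:R.
    rewrite /nrm2 /ip Re_sum (eq_bigr (fun _ => 1)) ?sumr_const ?card_ord // => k _.
    by rewrite !mxE /cconj unitmod // normzki.
  have -> : nrm2 (G0 i) = n%:R * ((N%:R)^-1 * (N%:R)^-1).
    rewrite /nrm2 /ip Re_sum (eq_bigr (fun _ => (N%:R)^-1 * (N%:R)^-1)).
      by rewrite sumr_const card_ord mulr_natl.
    move=> k _; rewrite !mxE /cconj conjcM cNJ.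
    have -> : cN * (z ^+ k) ^+ i * (cN * conjc ((z ^+ k) ^+ i)) =
        cN * cN * ((z ^+ k) ^+ i * conjc ((z ^+ k) ^+ i)) by ring.
    by rewrite unitmod ?normzki // mulr1 /cN -rmorphM.
  have N0 : (N%:R : R) != 0 by rewrite pnatr_eq0 -lt0n.
  by field.
by rewrite sqrtr_sqr ger0_norm.
Qed.
End Harm.
End S.

Local Open Scope classical_set_scope.
Theorem corollary3p3 (R : realType) (n N : nat) :
  (n <= N)%N -> @opt1 R n N !=set0.
Proof.
move=> nN.
have inf_eq : forall (S : set R) v, S v -> lbound S v -> inf S = v.
  move=> S v Sv lb; apply/eqP; rewrite eq_le; apply/andP; split.
  - exact: (ge_inf (ex_intro _ v lb) Sv).
  - exact: (lb_le_inf (ex_intro _ v Sv) lb).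
case: N nN => [|N] nN.
  move: nN; rewrite leqn0 => /eqP n0; subst n.
  exists ((fun _ => 0), (fun _ => 0)); split.
    split.
      exists 1, 1; split; first exact: ltr01.
      split=> // f; rewrite /nrm2 /ip !big_ord0 mulr0 lexx; by [].
    by move=> f; rewrite big_ord0; apply/matrixP => [[]].
  rewrite /eps1FG big_ord0 /=; apply/esym/inf_eq.
    exists (fun _ => 0), (fun _ => 0); split; last by rewrite /eps1FG big_ord0.
    split.
      exists 1, 1; split; first exact: ltr01.
      split=> // f; rewrite /nrm2 /ip !big_ord0 mulr0 lexx; by [].
    by move=> f; rewrite big_ord0; apply/matrixP => [[]].
  by move=> e [F [G [_ ->]]]; rewrite /eps1FG big_ord0.
have [z hz] := prim_ex R N.+1 (ltn0Sn N).
have Np := ltn0Sn N.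
exists (F0 R n N.+1 z, G0 R n N.+1 z); split.
  by split; [exact: frame0 | exact: dual0].
rewrite /=; apply/esym/inf_eq.
  exists (F0 R n N.+1 z), (G0 R n N.+1 z); split => //.
  by split; [exact: frame0 | exact: dual0].
move=> e [F [G [[_ dG] ->]]].
apply: le_trans (eps0 R n N.+1 z Np hz) _.
have := lower R n N.+1 F G dG.
by rewrite ler_pdivrMr ?ltr0n // mulrC.
Qed.
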